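(* Let $p_1,\ldots,p_m\in\mathbb Z_{>0}$ and $p=\operatorname{lcm}(p_1,\ldots,p_m)$. Let $\Omega_1,\ldots,\Omega_m$ be words in polynomial letters, $e_1,\ldots,e_m\in\mathbb Z_{\ge0}$, $z\in\mathbb C$, $t\in\mathbb Z_{\ge0}$, $P_1,\ldots,P_t\in\mathbb C[x]$ and $q_1,\ldots,q_t\in\mathbb C$ ($t=0$ allowed). Assume that all polynomial factors appearing are nonzero at the positive integers at which they are evaluated, after all scale changes (each polynomial $Q$ occurring in a letter of $\Omega_j$ satisfies $Q(m/(p/p_j))\ne0$ and each $P_\nu$ satisfies $P_\nu(m/p)\neq0$, for positive integers $m\le pk$), and fix compatible branches of the powers. Then for every positive integer $k$, \[ S(k)=\sum_{n=1}^{k}z^n\prod_{\nu=1}^{t}P_\nu(n)^{q_\nu}\prod_{j=1}^{m}\mathcal P_{\Omega_j}(p_jn)^{e_j}\in\operatorname{span}_{\mathbb C}\{\mathcal P_\Theta(pk)\}_\Theta, \] where $\Theta$ ranges over words in polynomial letters.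
   Context: A polynomial letter is a triple $L=(\boldsymbol\rho,\sigma,\mathbf P)$ with $\boldsymbol\rho=(\rho_1,\ldots,\rho_t)\in\mathbb C^t$, $\sigma\in\mathbb C$, $\mathbf P=(P_1,\ldots,P_t)$, $P_\nu\in\mathbb C[x]$; its value at a positive integer $n$ is $L(n)=\sigma^n\prod_{\nu=1}^tP_\nu(n)^{-\rho_\nu}$ (branches fixed). For a word $\Omega=(L_1,\ldots,L_d)$ of polynomial letters, $\mathcal P_\Omega(N)=\sum_{N\ge n_1>\cdots>n_d\ge1}\prod_{j=1}^dL_j(n_j)$ and $\mathcal P_\emptyset(N)=1$. *)

(* Defs.v *)
From HB Require Import structures.
From mathcomp Require Import all_boot all_order all_algebra.
From mathcomp Require Import reals sequences exp trigo.
From mathcomp Require Import complex.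
From Stdlib Require List.
Set Implicit Arguments. Unset Strict Implicit. Unset Printing Implicit Defensive.
Import Order.TTheory GRing.Theory Num.Theory.
Local Open Scope ring_scope.

Section PolyLetters.
Variable R : realType.
Local Notation C := (R[i]).

Definition expC (w : C) : C :=
  let: Complex a b := w in Complex (expR a * cos b) (expR a * sin b).

(* A fixed branch of the complex power:  w ^ a := exp (a * lg w), where
   lg is a fixed branch of the logarithm (hypothesis: expC (lg w) = w for w != 0). *)
Definition cpow (lg : C -> C) (w a : C) : C := expC (a * lg w).

(* A polynomial letter L = (rho, sigma, P): lsig = sigma, lfac = [(rho_1,P_1);...;(rho_t,P_t)] *)
Record letter := Letter { lsig : C; lfac : seq (C * {poly C}) }.

Definition letter_val (lg : C -> C) (L : letter) (n : nat) : C :=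
  lsig L ^+ n * \prod_(f <- lfac L) cpow lg (f.2).[n%:R] (- f.1).

Definition word := seq letter.

(* P_Omega(N) = sum_{N >= n_1 > ... > n_d >= 1} prod_j L_j(n_j),  P_[::](N) = 1,
   written recursively on the first letter. *)
Fixpoint Pword (lg : C -> C) (w : word) (N : nat) : C :=
  match w with
  | [::] => 1
  | L :: w' => \sum_(1 <= n < N.+1) letter_val lg L n * Pword lg w' n.-1
  end.

End PolyLetters.

(* Main.v *)
Set Warnings "-notation-overridden,-ambiguous-paths".
Require Import Defs.
From HB Require Import structures.
From mathcomp Require Import all_boot all_order all_algebra.
From mathcomp Require Import reals sequences exp trigo.
From mathcomp Require Import complex.
From Stdlib Require List.
From mathcomp Require Import all_fingroup all_solvable all_field.
From mathcomp Require Import ring.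
Import Order.TTheory GRing.Theory Num.Theory.
Set Implicit Arguments. Unset Strict Implicit. Unset Printing Implicit Defensive.
Local Open Scope ring_scope.

Lemma prim_root_ex (R : realType) n : (n > 0)%N -> exists z : R[i], n.-primitive_root z.
Proof.
pose p : {poly R[i]} := 'X^n - 1; have [r Dp] := closed_field_poly_normal p.
move=> n_gt0; rewrite (monicP _) ?monicXnsubC // scale1r in Dp.
have rn1: all n.-unity_root r by apply/allP=> z; rewrite -root_prod_XsubC -Dp.
have sz_r: (n < (size r).+1)%N.
  by rewrite -(size_prod_XsubC r id) -Dp size_XnsubC.
have [|z] := hasP (has_prim_root n_gt0 rn1 _ sz_r); last by exists z.
by rewrite -separable_prod_XsubC -Dp separable_Xn_sub_1 // pnatr_eq0 -lt0n.
Qed.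

Section Span.
Variable R : realType.
Variable lg : R[i] -> R[i].
Local Notation C := (R[i]).

Definition Asp (f : nat -> C) := exists cs : seq (C * word R),
  forall N, f N = \sum_(c <- cs) c.1 * Pword lg c.2 N.
Definition Lsp (f : nat -> C) := exists ls : seq (C * letter R),
  forall n, f n = \sum_(l <- ls) l.1 * letter_val lg l.2 n.

Lemma Asp_ext f g : (forall N, f N = g N) -> Asp f -> Asp g.
Proof. by move=> e [cs H]; exists cs => N; rewrite -e. Qed.

Lemma Asp_ext' f g : Asp f -> (forall N, f N = g N) -> Asp g.
Proof. by move=> H e; apply: Asp_ext H. Qed.

Lemma Asp_const c : Asp (fun _ => c).
Proof. by exists [:: (c, [::])] => N; rewrite big_seq1 /= mulr1. Qed.

Lemma Asp_add f g : Asp f -> Asp g -> Asp (fun N => f N + g N).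
Proof. by move=> [c1 H1] [c2 H2]; exists (c1 ++ c2) => N; rewrite big_cat H1 H2. Qed.

Lemma Asp_scale a f : Asp f -> Asp (fun N => a * f N).
Proof.
move=> [cs H]; exists [seq (a * c.1, c.2) | c <- cs] => N.
by rewrite big_map H mulr_sumr; apply eq_bigr => c _ /=; rewrite mulrA.
Qed.

Lemma Asp_sum (I : Type) (s : seq I) (F : I -> nat -> C) :
  (forall i, Asp (F i)) -> Asp (fun N => \sum_(i <- s) F i N).
Proof.
elim: s => [|i s IH] H.
  by apply: (Asp_ext' (Asp_const 0)) => N; rewrite big_nil.
by apply: (Asp_ext' (Asp_add (H i) (IH H))) => N; rewrite big_cons.
Qed.

Lemma Asp_word w : Asp (Pword lg w).
Proof. by exists [:: (1, w)] => N; rewrite big_seq1 mul1r. Qed.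

Lemma Asp_sumL1 f h : Lsp f -> Asp h ->
  Asp (fun N => \sum_(1 <= n < N.+1) f n * h n.-1).
Proof.
move=> [ls Hl] [cs Hc].
exists [seq (l.1 * c.1, l.2 :: c.2) | l <- ls, c <- cs] => N.
rewrite big_allpairs_dep.
transitivity (\sum_(1 <= n < N.+1) \sum_(l <- ls) \sum_(c <- cs)
   (l.1 * c.1) * (letter_val lg l.2 n * Pword lg c.2 n.-1)).
  apply eq_bigr => n _; rewrite Hl Hc mulr_suml; apply eq_bigr => l _.
  by rewrite mulr_sumr; apply eq_bigr => c _; rewrite mulrACA.
rewrite exchange_big; apply eq_bigr => l _; rewrite exchange_big.
by apply eq_bigr => c _ /=; rewrite mulr_sumr.
Qed.

Lemma Lsp_letter L : Lsp (letter_val lg L).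
Proof. by exists [:: (1, L)] => n; rewrite big_seq1 mul1r. Qed.

Definition Lmul (a b : letter R) := Letter (lsig a * lsig b) (lfac a ++ lfac b).

Lemma letter_valM a b n :
  letter_val lg (Lmul a b) n = letter_val lg a n * letter_val lg b n.
Proof. by rewrite /letter_val /= exprMn big_cat /= mulrACA. Qed.

Lemma Lsp_mulL f b : Lsp f -> Lsp (fun n => f n * letter_val lg b n).
Proof.
move=> [ls H]; exists [seq (l.1, Lmul l.2 b) | l <- ls] => n.
by rewrite big_map H mulr_suml; apply eq_bigr => l _ /=; rewrite letter_valM mulrA.
Qed.

Lemma PwordS L w n : Pword lg (L :: w) n.+1 =
  Pword lg (L :: w) n + letter_val lg L n.+1 * Pword lg w n.
Proof. by rewrite [LHS]/= big_nat_recr. Qed.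

Lemma Pword0 L w : Pword lg (L :: w) 0 = 0.
Proof. by rewrite /= big_geq. Qed.

Lemma Asp_sumL0 f h : Lsp f -> Asp h ->
  Asp (fun N => \sum_(1 <= n < N.+1) f n * h n).
Proof.
move=> Hf [cs Hc].
have H1 : forall w, Asp (fun N => \sum_(1 <= n < N.+1) f n * Pword lg w n).
  case=> [|b w].
    by apply: (Asp_ext' (Asp_sumL1 Hf (Asp_const 1))) => N.
  apply: Asp_ext (Asp_add (Asp_sumL1 Hf (Asp_word (b::w)))
                          (Asp_sumL1 (Lsp_mulL b Hf) (Asp_word w))) => N.
  rewrite -big_split; apply: eq_big_nat => n /andP[n1 _].
  case: n n1 => // n _.
  by rewrite PwordS mulrDr mulrA.
apply: (Asp_ext' (Asp_sum cs (fun c => Asp_scale c.1 (H1 c.2)))) => N.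
symmetry.
transitivity (\sum_(1 <= n < N.+1) \sum_(c <- cs) c.1 * (f n * Pword lg c.2 n)).
  apply eq_bigr => n _; rewrite Hc mulr_sumr; apply eq_bigr => c _.
  by rewrite mulrCA.
by rewrite exchange_big; apply eq_bigr => c _; rewrite mulr_sumr.
Qed.


Lemma Asp_mulw u v : Asp (fun N => Pword lg u N * Pword lg v N).
Proof.
elim: u v => [|a u IHu] v.
  by apply: (Asp_ext' (Asp_word v)) => N; rewrite [Pword _ [::] _]/= mul1r.
elim: v => [|b v IHv].
  by apply: (Asp_ext' (Asp_word (a :: u))) => N; rewrite [Pword _ [::] _]/= mulr1.
have key : forall N, Pword lg (a :: u) N * Pword lg (b :: v) N =
  \sum_(1 <= n < N.+1) (letter_val lg a n * (Pword lg u n.-1 * Pword lg (b :: v) n.-1)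
     + letter_val lg b n * (Pword lg (a :: u) n.-1 * Pword lg v n.-1)
     + letter_val lg (Lmul a b) n * (Pword lg u n.-1 * Pword lg v n.-1)).
  elim=> [|N IHN]; first by rewrite !Pword0 mul0r big_geq.
  rewrite !PwordS (big_nat_recr N.+1) // -IHN letter_valM /=.
  change (N.+1.-1) with N.
  ring.
apply: (Asp_ext' (Asp_add (Asp_add (Asp_sumL1 (Lsp_letter a) (IHu (b :: v)))
   (Asp_sumL1 (Lsp_letter b) IHv)) (Asp_sumL1 (Lsp_letter (Lmul a b)) (IHu v)))) => N.
by rewrite key -!big_split.
Qed.

Lemma Asp_mul f g : Asp f -> Asp g -> Asp (fun N => f N * g N).
Proof.
move=> [c1 H1] [c2 H2].
apply: (Asp_ext' (Asp_sum c1 (fun x => Asp_sum c2 (fun y =>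
   Asp_scale (x.1 * y.1) (Asp_mulw x.2 y.2))))) => N.
rewrite H1 H2 mulr_suml; apply eq_bigr => x _; rewrite mulr_sumr.
by apply eq_bigr => y _; rewrite mulrACA.
Qed.

Lemma Asp_prod (I : Type) (s : seq I) (F : I -> nat -> C) :
  (forall i, Asp (F i)) -> Asp (fun N => \prod_(i <- s) F i N).
Proof.
elim: s => [|i s IH] H.
  by apply: (Asp_ext' (Asp_const 1)) => N; rewrite big_nil.
by apply: (Asp_ext' (Asp_mul (H i) (IH H))) => N; rewrite big_cons.
Qed.

Lemma Asp_expn f e : Asp f -> Asp (fun N => f N ^+ e).
Proof.
move=> H; elim: e => [|e IH].
  by apply: (Asp_ext' (Asp_const 1)) => N; rewrite expr0.
by apply: (Asp_ext' (Asp_mul H IH)) => N; rewrite exprS.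
Qed.


Lemma geom_prim d (ze : C) n : (0 < d)%N -> d.-primitive_root ze ->
  \sum_(0 <= r < d) (ze ^+ n) ^+ r = if (d %| n)%N then d%:R else 0.
Proof.
move=> d0 hz; rewrite (prim_order_dvd hz n).
case: eqP => [->|ne].
  rewrite (eq_bigr (fun _ => 1)) => [|r _]; last by rewrite expr1n.
  by rewrite sumr_const_nat subn0.
have : (ze ^+ n - 1) * \sum_(0 <= r < d) (ze ^+ n) ^+ r = 0.
  rewrite big_mkord -subrX1 -exprM mulnC exprM (prim_expr_order hz).
  by rewrite expr1n subrr.
by move/eqP; rewrite mulf_eq0 subr_eq0 => /orP[/eqP//|/eqP].
Qed.

Lemma Lsp_filter d (s : C) (fs : seq (C * {poly C})) : (0 < d)%N ->
  Lsp (fun n => if (d %| n)%N then s ^+ (n %/ d) *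
       \prod_(f <- fs) cpow lg (f.2).[(n %/ d)%:R] (- f.1) else 0).
Proof.
move=> d0; have [ze hz] := prim_root_ex R d0.
pose w := d.-root s; have hw : w ^+ d = s := rootCK d0 s.
pose fs' := [seq (f.1, f.2 \Po ('X * (d%:R^-1)%:P)) | f <- fs].
exists [seq (d%:R^-1, Letter (ze ^+ r * w) fs') | r <- index_iota 0 d] => n.
rewrite big_map.
transitivity (d%:R^-1 * (\sum_(0 <= r < d) (ze ^+ n) ^+ r) *
   (w ^+ n * \prod_(f <- fs') cpow lg (f.2).[n%:R] (- f.1))); last first.
  rewrite mulr_sumr mulr_suml; apply eq_bigr => r _.
  rewrite /letter_val /= exprMn -!exprM mulnC.
  by rewrite !mulrA.
rewrite geom_prim //; case: ifP => dn; last by rewrite mulr0 mul0r.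
have dR : (d%:R : C) != 0 by rewrite pnatr_eq0 -lt0n.
rewrite mulVf // mul1r.
have en : n = (d * (n %/ d))%N by rewrite mulnC divnK.
congr (_ * _).
  by rewrite [in RHS]en exprM hw.
rewrite /fs' big_map; apply eq_bigr => f _ /=.
rewrite horner_comp !hornerE.
have -> : (n%:R * d%:R^-1 : C) = (n %/ d)%:R.
  by rewrite [in LHS]en natrM mulrC mulKf.
by [].
Qed.

Lemma reindex_div d M (G : nat -> C) : (0 < d)%N ->
  \sum_(1 <= i < (M %/ d)%N.+1) G i =
  \sum_(1 <= n < M.+1) (if (d %| n)%N then G (n %/ d)%N else 0).
Proof.
move=> d0; elim: M => [|M IH]; first by rewrite div0n !big_geq.
rewrite (big_nat_recr M.+1) // -IH.
have := divnS M d0; case: ifP => dM ->.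
  by rewrite add1n big_nat_recr.
by rewrite add0n /= addr0.
Qed.

Lemma Asp_scaleword d w : (0 < d)%N -> Asp (fun M => Pword lg w (M %/ d)).
Proof.
move=> d0; elim: w => [|L w IH].
  exact: (Asp_ext' (Asp_const 1)).
apply: (Asp_ext' (Asp_sumL1 (Lsp_filter (lsig L) (lfac L) d0) IH)) => M.
rewrite [RHS]/= (reindex_div _ _ d0).
apply: eq_big_nat => n /andP[n1 _].
case: ifP => dn; last by rewrite mul0r.
congr (_ * Pword lg w _).
have [q eq] : exists q, n = (q.+1 * d)%N.
  exists (n %/ d).-1; rewrite prednK ?divnK //.
  by rewrite divn_gt0 // dvdn_leq.
rewrite eq mulnK // mulSn addnC -subn1 -addnBA ?divnMDl //.
by rewrite divn_small ?addn0 // subn1 prednK.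
Qed.

End Span.
Theorem theorem6p3 (R : realType) (lg : R[i] -> R[i])
  (hlg : forall w : R[i], w != 0 -> expC (lg w) = w)
  (m : nat) (hm : (0 < m)%N)
  (ps : 'I_m -> nat) (hps : forall j, (0 < ps j)%N)
  (Om : 'I_m -> word R) (es : 'I_m -> nat)
  (z : R[i]) (PQ : seq (R[i] * {poly R[i]}))
  (* PQ = [:: (q_1, P_1); ...; (q_t, P_t)] *)
  (p : nat) (hp : p = \big[lcmn/1%N]_(j < m) ps j)
  (hOm : forall (j : 'I_m) (L : letter R) (f : R[i] * {poly R[i]}),
      List.In L (Om j) -> List.In f (lfac L) ->
      forall n : nat, (0 < n)%N -> (f.2).[n%:R / (p %/ ps j)%:R] != 0)
  (hPQ : forall f, f \in PQ ->
      forall n : nat, (0 < n)%N -> (f.2).[n%:R / p%:R] != 0) :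
  exists cs : seq (R[i] * word R),
    forall k : nat, (0 < k)%N ->
      \sum_(1 <= n < k.+1)
          z ^+ n * \prod_(f <- PQ) cpow lg (f.2).[n%:R] f.1
            * \prod_(j < m) Pword lg (Om j) (ps j * n) ^+ es j
      = \sum_(c <- cs) c.1 * Pword lg c.2 (p * k).
Proof.
have p0 : (0 < p)%N.
  rewrite hp; apply: (big_ind (fun x => 0 < x)%N) => //.
  by move=> x y; rewrite lcmn_gt0 => -> ->.
have pd j : (ps j %| p)%N by rewrite hp; apply: (biglcmn_sup j).
pose d j := (p %/ ps j)%N.
have d0 j : (0 < d j)%N by rewrite divn_gt0 ?hps // dvdn_leq.
have HP : Asp lg (fun M => \prod_(j < m) Pword lg (Om j) (M %/ d j) ^+ es j).
  apply: Asp_prod => j; apply: Asp_expn; exact: Asp_scaleword.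
have HL := Lsp_filter lg z [seq (- f.1, f.2) | f <- PQ] p0.
have [cs Hcs] := Asp_sumL0 HL HP.
exists cs => k k0; rewrite -Hcs.
rewrite -{1}(mulKn k p0) (reindex_div _ _ p0).
apply: eq_big_nat => n _.
case: ifP => pn; last by rewrite mul0r.
rewrite big_map.
under [in RHS]eq_bigr do rewrite opprK.
congr (_ * _); apply: eq_bigr => j _.
have -> : (n %/ d j)%N = (ps j * (n %/ p))%N.
  rewrite -{1}(divnK pn) -{2}(divnK (pd j)) -/(d j).
  by rewrite [(d j * _)%N]mulnC mulnA mulnK // mulnC.
by [].
Qed.
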